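(* Let $\tau=\overline{\mathrm{K\ddot ah}(X)}\subset L_{\mathrm{ext}}^\vee\otimes\mathbb{R}$ and $\beta=(0,\dots,0,-1/2,\dots,-1/2)$. Let $\mathcal{I}'\subset\mathbb{C}[\alpha_{i,j}:(i,j)\in J]$ be the ideal generated by (a') $I_{\ell_{\mathrm{ext}}(\mathcal{P})}(\alpha)$ for all primitive collections $\mathcal{P}$ of $\Sigma$, and (b') $\sum_{(i,j)\in J}\langle\bar m,\nu_{i,j}\rangle\alpha_{i,j}-\langle\bar m,\beta\rangle$ for all $\bar m\in M\times\mathbb{Z}^r$. Then $\mathcal{I}'\subset\mathrm{Ind}(\tau,\beta)$, and $\mathcal{I}'$ and $\mathrm{Ind}(\tau,\beta)$ have the same zero locus in $\mathbb{C}^J$.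
   Context: $N\cong\mathbb{Z}^n$, $M$ dual. $X$ smooth projective toric with fan $\Sigma$ and nef-partition $\Sigma(1)=I_1\sqcup\cdots\sqcup I_r$ (each $E_i=\sum_{\rho\in I_i}D_\rho$ nef), $I_i=\{\rho_{i,1},\dots,\rho_{i,n_i}\}$, $J=\{(i,j):1\le i\le r,0\le j\le n_i\}$, $\nu_{i,j}=(\rho_{i,j},e_i)$ ($j\ge1$), $\nu_{i,0}=(0,e_i)$ in $N\times\mathbb{Z}^r$. $A_{\mathrm{ext}}:\mathbb{Z}^J\to N\times\mathbb{Z}^r$, $e_{i,j}\mapsto\nu_{i,j}$, $L_{\mathrm{ext}}=\ker A_{\mathrm{ext}}$, isomorphic via forgetting $(i,0)$-coordinates to $L=\ker(e_{i,j}\mapsto\rho_{i,j})\cong H_2(X,\mathbb{Z})$, so $H^2(X,\mathbb{R})\cong L_{\mathrm{ext}}^\vee\otimes\mathbb{R}$; $\overline{\mathrm{K\ddot ah}(X)}$ is the closed Kähler (= nef) cone in it. For $\ell\in L_{\mathrm{ext}}$ with $\ell=\ell^+-\ell^-$ ($\ell^\pm\ge0$, disjoint supports), $I_\ell(\alpha):=x^{-\alpha}x^{\ell^+}\partial_x^{\ell^+}x^\alpha=\prod_{(i,j)\in J}\prod_{k=0}^{\ell^+_{i,j}-1}(\alpha_{i,j}-k)\in\mathbb{C}[\alpha]$. For a cone $\tau\subset L_{\mathrm{ext}}^\vee\otimes\mathbb{R}$ and $\beta\in\mathbb{C}^{n+r}$, the indicial ideal $\mathrm{Ind}(\tau,\beta)\subset\mathbb{C}[\alpha_{i,j}:(i,j)\in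 J]$ is generated by $I_\ell(\alpha)$ for $0\ne\ell\in\tau^\vee\cap L_{\mathrm{ext}}$ and by $\sum_{(i,j)\in J}\langle\bar m,\nu_{i,j}\rangle\alpha_{i,j}-\langle\bar m,\beta\rangle$ for $\bar m\in M\times\mathbb{Z}^r$. A primitive collection is $\mathcal{P}\subset\Sigma(1)$ not spanning a cone while every proper subset does; $\ell_{\mathrm{ext}}(\mathcal{P})\in L_{\mathrm{ext}}$ is the image of its primitive relation $\ell(\mathcal{P})\in L$ (coefficients of $\sum_{\mathcal{P}}\rho_{i,j}-\sum_{\sigma(1)}c_{i,j}\rho_{i,j}=0$, where $\sigma$ is the cone containing $\sum_\mathcal{P}\rho_{i,j}$ in its relative interior and $c_{i,j}\in\mathbb{Z}_{>0}$). *)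

(* Defs.v *)
From HB Require Import structures.
From mathcomp Require Import all_boot all_order all_algebra.
From mathcomp Require Import Rstruct.
From mathcomp Require Import complex.
From mathcomp Require Import mpoly.
From Stdlib Require Import Rdefinitions.

Set Implicit Arguments.
Unset Strict Implicit.
Unset Printing Implicit Defensive.

Import Order.TTheory GRing.Theory Num.Theory.
Local Open Scope ring_scope.

Definition RR : rcfType := Rdefinitions.R.
Definition CC : fieldType := complex RR.

(** N = Z^n, an element of N (or M) is a function 'I_n -> int.
    The rays of the fan are indexed by 'I_m, ray k has primitive generator
    [rho k : 'I_n -> int].  A fan is given by the set of its cones, each cone
    being described by the set of indices of the rays generating it. *)

Section Toric.
Variables (n m r : nat).
Variable rho : 'I_m -> 'I_n -> int.
Variable Sigma : {set {set 'I_m}}.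

Definition rcone (S : {set 'I_m}) (v : 'I_n -> RR) : Prop :=
  exists c : 'I_m -> RR,
    (forall k, 0 <= c k) /\ (forall k, k \notin S -> c k = 0) /\
    (forall t, v t = \sum_(k < m) c k * (rho k t)%:~R).

(** [S] is a smooth cone: its ray generators are part of a Z-basis of N *)
Definition smooth_cone (S : {set 'I_m}) : Prop :=
  exists B : 'M[int]_n, B \in unitmx /\
    forall k, k \in S -> exists j : 'I_n, forall t, rho k t = B j t.

Definition maximal_cone (S : {set 'I_m}) : bool :=
  (S \in Sigma) && [forall T : {set 'I_m}, (T \in Sigma) ==> (S \subset T) ==> (T == S)].

(** Sigma is a complete smooth fan in N_R whose set of rays Sigma(1) is
    exactly {rho k | k < m}. *)
Definition smooth_complete_fan : Prop :=
  [/\ injective rho /\ (forall k, [set k] \in Sigma),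
      (forall S T : {set 'I_m}, S \in Sigma -> T \subset S -> T \in Sigma),
      (forall S, S \in Sigma -> smooth_cone S),
      (forall S T : {set 'I_m}, S \in Sigma -> T \in Sigma ->
         forall v, (rcone S v /\ rcone T v) <-> rcone (S :&: T) v) &
      (forall v : 'I_n -> RR, exists2 S, S \in Sigma & rcone S v)].

(** An R-divisor sum_k a_k D_k, a : 'I_m -> RR, is nef iff its support
    function is convex: on each maximal cone sigma there is m_sigma in M_R
    with <m_sigma, rho_k> = - a_k for k in sigma and >= - a_k for all k. *)
Definition nef_divisor (a : 'I_m -> RR) : Prop :=
  forall S, maximal_cone S ->
    exists u : 'I_n -> RR,
      (forall k, k \in S -> \sum_(t < n) u t * (rho k t)%:~R = - a k) /\
      (forall k, - a k <= \sum_(t < n) u t * (rho k t)%:~R).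

(** ample: strictly convex support function *)
Definition ample_divisor (a : 'I_m -> RR) : Prop :=
  forall S, maximal_cone S ->
    exists u : 'I_n -> RR,
      (forall k, k \in S -> \sum_(t < n) u t * (rho k t)%:~R = - a k) /\
      (forall k, k \notin S -> - a k < \sum_(t < n) u t * (rho k t)%:~R).

Definition smooth_projective_fan : Prop :=
  smooth_complete_fan /\ exists a, ample_divisor a.

(** nef-partition: Sigma(1) = I_1 |_| ... |_| I_r, ray k lies in I_(part k),
    and each E_i = sum_{k in I_i} D_k is nef. *)
Definition nef_partition (part : 'I_m -> 'I_r) : Prop :=
  forall i : 'I_r, nef_divisor (fun k => if part k == i then 1 else 0).

(** * The index set J = {(i,j)} is encoded as 'I_(m + r):
    [lshift r k] is the coordinate (i,j), j >= 1, of ray k (i = part k),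
    [rshift m i] is the coordinate (i,0). *)
Variable part : 'I_m -> 'I_r.

Definition nu (j : 'I_(m + r)) : ('I_n -> int) * ('I_r -> int) :=
  match split j with
  | inl k => (rho k, fun i => (part k == i)%:R)
  | inr i => (fun _ => 0, fun i' => (i == i')%:R)
  end.

Definition in_Lext (l : 'I_(m + r) -> int) : Prop :=
  (forall t, \sum_(j < m + r) l j * (nu j).1 t = 0) /\
  (forall i, \sum_(j < m + r) l j * (nu j).2 i = 0).

(** tau^vee for tau the closed Kaehler (= nef) cone in
    H^2(X,R) = L_ext^vee (x) R: the class of the R-divisor sum_k a_k D_k pairs
    with l in L_ext (identified with L by forgetting the (i,0)-coordinates)
    as sum_k a_k l_k. *)
Definition in_dual_Kahler (l : 'I_(m + r) -> int) : Prop :=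
  forall a : 'I_m -> RR, nef_divisor a ->
    0 <= \sum_(k < m) a k * (l (lshift r k))%:~R.

Definition primitive_collection (P : {set 'I_m}) : Prop :=
  P \notin Sigma /\ forall Q : {set 'I_m}, Q \proper P -> Q \in Sigma.

(** l is the primitive relation l(P) in L of P: sum_P rho_k = sum_{sigma} c_k rho_k
    with sigma in Sigma, c_k positive integers (so that sum_P rho_k lies in the
    relative interior of sigma), and l = coefficients of
    sum_P rho_k - sum_sigma c_k rho_k. *)
Definition primitive_relation (P : {set 'I_m}) (l : 'I_m -> int) : Prop :=
  exists sigma : {set 'I_m}, exists c : 'I_m -> int,
    [/\ sigma \in Sigma,
        (forall k, k \in sigma -> 0 < c k),
        (forall t, \sum_(k in P) rho k t = \sum_(k in sigma) c k * rho k t) &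
        (forall k, l k = (k \in P)%:R - (if k \in sigma then c k else 0))].

(** the image of l in L under the isomorphism L ~ L_ext *)
Definition ext_of (l : 'I_m -> int) (j : 'I_(m + r)) : int :=
  match split j with
  | inl k => l k
  | inr i => - \sum_(k < m | part k == i) l k
  end.

End Toric.

Section Poly.
Variable N : nat.

Definition Ipoly (l : 'I_N -> int) : {mpoly CC[N]} :=
  \prod_(j < N) \prod_(t < absz (Num.max (l j) 0)) ('X_j - (t%:R)%:MP).

Definition in_ideal (G : {mpoly CC[N]} -> Prop) (p : {mpoly CC[N]}) : Prop :=
  exists s : seq ({mpoly CC[N]} * {mpoly CC[N]}),
    (forall q, q \in s -> G q.2) /\ p = \sum_(q <- s) q.1 * q.2.

Definition zero_locus (G : {mpoly CC[N]} -> Prop) (x : 'I_N -> CC) : Prop :=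
  forall p, in_ideal G p -> p.@[x] = 0.

End Poly.

Section Ideals.
Variables (n m r : nat).
Variable rho : 'I_m -> 'I_n -> int.
Variable Sigma : {set {set 'I_m}}.
Variable part : 'I_m -> 'I_r.

(** generator (b)/(b') attached to mbar = (mu, mu') in M x Z^r, with
    beta = (0,...,0,-1/2,...,-1/2) in C^(n+r):
    sum_j <mbar, nu_j> alpha_j - <mbar, beta>. *)
Definition lin_gen (mu : 'I_n -> int) (mu' : 'I_r -> int) : {mpoly CC[m + r]} :=
  \sum_(j < m + r)
     ((\sum_(t < n) mu t * (nu rho part j).1 t
       + \sum_(i < r) mu' i * (nu rho part j).2 i)%:~R)%:MP * 'X_j
  - ((- (1 / 2)) * (\sum_(i < r) mu' i)%:~R : CC)%:MP.

Definition Ind_gens (p : {mpoly CC[m + r]}) : Prop :=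
  (exists l : 'I_(m + r) -> int,
     [/\ l <> (fun _ => 0), in_Lext rho part l, in_dual_Kahler rho Sigma l &
         p = Ipoly l])
  \/ (exists mu mu', p = lin_gen mu mu').

Definition Iprime_gens (p : {mpoly CC[m + r]}) : Prop :=
  (exists P l, [/\ primitive_collection Sigma P, primitive_relation rho Sigma P l &
                  p = Ipoly (ext_of part l)])
  \/ (exists mu mu', p = lin_gen mu mu').

End Ideals.

(* Main.v *)
Require Import Defs.
From HB Require Import structures.
From mathcomp Require Import all_boot all_order all_algebra.
From mathcomp Require Import Rstruct complex mpoly.
From mathcomp Require Import zify.
From Stdlib Require Import FunctionalExtensionality.
Import Order.TTheory GRing.Theory Num.Theory.
Local Open Scope ring_scope.
Set Implicit Arguments. Unset Strict Implicit.


Lemma smooth_int (n m : nat) (rho : 'I_m -> 'I_n -> int) (S : {set 'I_m})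
  (c : 'I_m -> RR) (v : 'I_n -> int) :
  injective rho -> smooth_cone rho S ->
  (forall k, k \notin S -> c k = 0) ->
  (forall t, (v t)%:~R = \sum_(k < m) c k * (rho k t)%:~R) ->
  exists z : 'I_m -> int, (forall k, c k = (z k)%:~R) /\
     ((forall t, v t = 0) -> forall k, z k = 0).
Proof.
move=> injr [B [Bu hB]] c0 hv.
pose jf k := [pick j | [forall t, rho k t == B j t]].
have jfS k : k \in S -> exists2 j, jf k = Some j & forall t, rho k t = B j t.
  move=> kS; rewrite /jf; case: pickP => [j /forallP hj | none].
    by exists j => // t; apply/eqP.
  have [j hj] := hB k kS; have := none j; move/negbT/forallPn => [t].
  by rewrite hj eqxx.
have jfP k j : jf k = Some j -> forall t, rho k t = B j t.
  by rewrite /jf; case: pickP => // j' /forallP h [<-] t; apply/eqP.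
pose d j := \sum_(k in S | jf k == Some j) c k.
pose BR := map_mx (intr : int -> RR) B.
pose dR := \row_j d j.
pose vR := \row_t ((v t)%:~R : RR).
have e1 : dR *m BR = vR.
  apply/rowP => t; rewrite !mxE hv.
  transitivity (\sum_j \sum_(k in S | jf k == Some j) c k * (rho k t)%:~R).
    apply: eq_bigr => j _; rewrite mxE /d mulr_suml; apply: eq_bigr => k /andP[_ /eqP hk].
    by rewrite mxE (jfP _ _ hk).
  rewrite (bigID (fun k => k \in S)) /= [X in _ + X]big1 ?addr0; last by move=> k /c0 ->; rewrite mul0r.
  rewrite (exchange_big_dep (fun k => k \in S)) /=; last by move=> j k _ /andP[].
  apply: eq_bigr => k kS.
  have [j hj _] := jfS k kS.
  by rewrite (big_pred1 j) // => j'; rewrite /= kS hj.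
pose C := invmx B.
have BC : B *m C = 1%:M by rewrite mulmxV.
have BCR : BR *m map_mx (intr : int -> RR) C = 1%:M.
  by rewrite -map_mxM BC map_mx1.
have e2 : dR = map_mx (intr : int -> RR) (\row_t v t *m C).
  rewrite map_mxM -[dR]mulmx1 -BCR mulmxA e1; congr (_ *m _).
  by apply/rowP => t; rewrite !mxE.
pose w := \row_t v t *m C.
exists (fun k => if k \in S then (if jf k is Some j then w 0 j else 0) else 0).
split.
  move=> k; case: ifP => kS; last by rewrite c0 ?kS.
  have [j hj _] := jfS k kS; rewrite hj.
  have := congr1 (fun M : 'rV[RR]_n => M 0 j) e2; rewrite !mxE => <-.
  rewrite /d (big_pred1 k) // => k'; rewrite /= -hj.
  apply/andP/eqP => [[k'S /eqP hk'] | ->]; last by rewrite eqxx; split.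
  apply: injr; apply: FunctionalExtensionality.functional_extensionality => t.
  have [j' hj' _] := jfS k' k'S.
  have [ej] : Some j' = Some j by rewrite -hj' hk' hj.
  by rewrite (jfP _ _ hj') ej (jfP _ j hj).
move=> v0 k; case: ifP => // _; case: (jf k) => // j.
rewrite /w !mxE big1 // => t _; by rewrite mxE v0 mul0r.
Qed.


Section IdealAux.
Variable N : nat.
Implicit Types G H : {mpoly CC[N]} -> Prop.

Lemma in_ideal_gen G g : G g -> in_ideal G g.
Proof.
move=> Gg; exists [:: (1, g)]; split; first by move=> q; rewrite inE => /eqP ->.
by rewrite big_seq1 mul1r.
Qed.

Lemma in_ideal_mono G H p : (forall g, G g -> H g) -> in_ideal G p -> in_ideal H p.
Proof. by move=> GH [s [hs ->]]; exists s; split => // q /hs /GH. Qed.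

Lemma in_ideal_eval G p x : (forall g, G g -> g.@[x] = 0) -> in_ideal G p -> p.@[x] = 0.
Proof.
move=> Gx [s [hs ->]]; rewrite rmorph_sum big1_seq // => q /hs /Gx.
by rewrite rmorphM /= => ->; rewrite mulr0.
Qed.

Lemma Ipoly_eval (l : 'I_N -> int) x :
  (Ipoly l).@[x] = \prod_(j < N) \prod_(t < absz (Num.max (l j) 0)) (x j - t%:R).
Proof.
rewrite /Ipoly rmorph_prod; apply: eq_bigr => j _; rewrite rmorph_prod.
by apply: eq_bigr => t _; rewrite rmorphB /= mevalXU mevalC.
Qed.

Lemma Ipoly_eval0 (l : 'I_N -> int) x :
  (Ipoly l).@[x] = 0 ->
  exists j, exists2 t : nat, (t < absz (Num.max (l j) 0))%N & x j = t%:R.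
Proof.
rewrite Ipoly_eval => /eqP /prodf_eq0 [j _ /prodf_eq0 [t _]].
by rewrite subr_eq0 => /eqP e; exists j, t.
Qed.

Lemma Ipoly_eval_zero (l : 'I_N -> int) x j :
  0 < l j -> x j = 0 -> (Ipoly l).@[x] = 0.
Proof.
move=> lj xj; rewrite Ipoly_eval (bigD1 j) //= .
have h : (0 < absz (Num.max (l j) 0))%N.
  by rewrite absz_gt0 gt_eqF // lt_max lj.
rewrite (bigD1 (Ordinal h)) //= xj subr0 mul0r mul0r //.
Qed.

End IdealAux.


Section T.
Variables (n m r : nat) (rho : 'I_m -> 'I_n -> int) (Sigma : {set {set 'I_m}}) (part : 'I_m -> 'I_r).

Lemma exists_max S : S \in Sigma -> exists T, maximal_cone Sigma T /\ S \subset T.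
Proof.
move=> SS.
have h0 : (fun T : {set 'I_m} => (T \in Sigma) && (S \subset T)) S by rewrite /= SS subxx.
have [T /andP[TS ST] Tmax] := @arg_maxnP _ S (fun T : {set 'I_m} => (T \in Sigma) && (S \subset T)) (fun T : {set 'I_m} => #|T|) h0.
exists T; split => //; rewrite /maximal_cone TS /=; apply/forallP => T'; apply/implyP => T'S; apply/implyP => TT'.
have := Tmax T'; rewrite T'S (subset_trans ST TT') => /(_ isT) hc.
by rewrite eq_sym eqEcard TT'; apply: hc.
Qed.

Lemma min_nonface (T : {set 'I_m}) : T \notin Sigma ->
  exists Q : {set 'I_m}, [/\ Q \subset T, Q \notin Sigma & forall Q' : {set 'I_m}, Q' \proper Q -> Q' \in Sigma].
Proof.
move=> TS.
have h0 : (fun Q : {set 'I_m} => (Q \subset T) && (Q \notin Sigma)) T by rewrite /= subxx TS.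
have [Q /andP[QT QS] Qmin] := @arg_minnP _ T (fun Q : {set 'I_m} => (Q \subset T) && (Q \notin Sigma)) (fun Q : {set 'I_m} => #|Q|) h0.
exists Q; split => // Q' Q'Q; apply/negPn/negP => Q'S.
have := Qmin Q'; rewrite (subset_trans (proper_sub Q'Q) QT) Q'S => /(_ isT).
by rewrite leqNgt proper_card.
Qed.

End T.


Section T.
Variables (n m r : nat) (rho : 'I_m -> 'I_n -> int) (Sigma : {set {set 'I_m}}) (part : 'I_m -> 'I_r).

Lemma prim_rel_exists : smooth_complete_fan rho Sigma ->
  forall P, exists l, primitive_relation rho Sigma P l.
Proof.
move=> [[injr _] hcl hsm _ hcomp] P.
pose v t := \sum_(k in P) rho k t.
have [S SS [c [cge [cS cv]]]] := hcomp (fun t => (v t)%:~R).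
have [z [cz z0]] := @smooth_int n m rho S c v injr (hsm S SS) cS cv.
pose sigma := [set k in S | 0 < z k].
have zge k : 0 <= z k by have := cge k; rewrite cz ler0z.
have zoff k : k \notin sigma -> z k = 0.
  rewrite inE negb_and; case kS: (k \in S) => /= hk.
    by apply/eqP; rewrite eq_le zge andbT leNgt.
  by apply/eqP; rewrite -(@intr_eq0 RR) -cz cS ?kS.
exists (fun k => (k \in P)%:R - (if k \in sigma then z k else 0)), sigma, z; split => //.
- by apply: (hcl S) => //; apply/subsetP => k; rewrite inE => /andP[].
- by move=> k; rewrite inE => /andP[].
move=> t; apply: (@intr_inj RR); rewrite -[LHS]/((v t)%:~R) cv rmorph_sum.
rewrite [LHS](bigID (fun k => k \in sigma)) /= [X in _ + X]big1 ?addr0; last first.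
  by move=> k /zoff; rewrite cz => ->; rewrite mul0r.
by apply: eq_bigr => k _; rewrite cz rmorphM.
Qed.

End T.


Section T.
Variables (n m r : nat) (rho : 'I_m -> 'I_n -> int) (Sigma : {set {set 'I_m}}) (part : 'I_m -> 'I_r).

Lemma nu_l k : nu rho part (lshift r k) = (rho k, fun i => (part k == i)%:R).
Proof. by rewrite /nu (unsplitK (inl _ k)). Qed.
Lemma nu_r i : nu rho part (rshift m i) = (fun _ => 0, fun i' => (i == i')%:R).
Proof. by rewrite /nu (unsplitK (inr _ i)). Qed.
Lemma ext_l l k : ext_of part l (lshift r k) = l k.
Proof. by rewrite /ext_of (unsplitK (inl _ k)). Qed.
Lemma ext_r l i : ext_of part l (rshift m i) = - \sum_(k < m | part k == i) l k.
Proof. by rewrite /ext_of (unsplitK (inr _ i)). Qed.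

Lemma Lext_rho L : in_Lext rho part L -> forall t, \sum_(k < m) L (lshift r k) * rho k t = 0.
Proof.
move=> [h1 _] t; have := h1 t; rewrite big_split_ord /=.
rewrite [X in _ + X]big1 ?addr0; last by move=> i _; rewrite nu_r mulr0.
by move=> h; rewrite -[RHS]h; apply: eq_bigr => k _; rewrite nu_l.
Qed.

Lemma Lext_r L : in_Lext rho part L ->
  forall i, L (rshift m i) = - \sum_(k < m | part k == i) L (lshift r k).
Proof.
move=> [_ h2] i; have := h2 i; rewrite big_split_ord /=.
rewrite [X in _ + X](bigD1 i) //= [X in _ + (_ + X)]big1 ?addr0; last first.
  by move=> i' hi; rewrite nu_r /= (negbTE (hi : i' != i)) mulr0.
rewrite nu_r /= eqxx mulr1 => /eqP; rewrite addrC addr_eq0 => /eqP ->; congr (- _).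
rewrite [RHS]big_mkcond /=; apply: eq_bigr => k _; rewrite nu_l /=.
by case: (part k == i); rewrite ?mulr1 ?mulr0.
Qed.

Lemma ext_Lext l : (forall t, \sum_(k < m) l k * rho k t = 0) -> in_Lext rho part (ext_of part l).
Proof.
move=> hl; split => [t|i]; rewrite big_split_ord /=.
  rewrite [X in _ + X]big1 ?addr0; last by move=> i _; rewrite nu_r mulr0.
  by rewrite -[RHS](hl t); apply: eq_bigr => k _; rewrite nu_l ext_l.
rewrite [X in _ + X](bigD1 i) //= [X in _ + (_ + X)]big1 ?addr0; last first.
  by move=> i' hi; rewrite nu_r /= (negbTE (hi : i' != i)) mulr0.
rewrite nu_r ext_r /= eqxx mulr1; apply/eqP; rewrite addrC addr_eq0 eqr_opp eq_sym; apply/eqP.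
rewrite [RHS]big_mkcond /=; apply: eq_bigr => k _; rewrite nu_l ext_l /=.
by case: (part k == i); rewrite ?mulr1 ?mulr0.
Qed.

Lemma prim_sum0 P l : primitive_relation rho Sigma P l -> forall t, \sum_(k < m) l k * rho k t = 0.
Proof.
move=> [sigma [c [_ _ hs hl]]] t.
under eq_bigr => k _ do rewrite hl mulrBl.
rewrite sumrB; apply/eqP; rewrite subr_eq0; apply/eqP.
have -> : \sum_(k < m) (k \in P)%:R * rho k t = \sum_(k in P) rho k t.
  by rewrite [RHS]big_mkcond; apply: eq_bigr => k _; case: (k \in P); rewrite ?mul1r ?mul0r.
have -> : \sum_(k < m) (if k \in sigma then c k else 0) * rho k t = \sum_(k in sigma) c k * rho k t.
  by rewrite [RHS]big_mkcond; apply: eq_bigr => k _; case: (k \in sigma); rewrite ?mul0r.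
by rewrite hs.
Qed.

End T.


Section T.
Variables (n m r : nat) (rho : 'I_m -> 'I_n -> int) (Sigma : {set {set 'I_m}}) (part : 'I_m -> 'I_r).

Lemma sum_U (u : 'I_n -> RR) (P sigma : {set 'I_m}) (c : 'I_m -> int) :
  (forall t, \sum_(k in P) rho k t = \sum_(k in sigma) c k * rho k t) ->
  \sum_(k in P) \sum_(t < n) u t * (rho k t)%:~R =
  \sum_(k in sigma) (c k)%:~R * \sum_(t < n) u t * (rho k t)%:~R.
Proof.
move=> hs.
rewrite exchange_big /=.
rewrite [RHS](eq_bigr (fun k => \sum_(t < n) (c k)%:~R * (u t * (rho k t)%:~R))); last first.
  by move=> k _; rewrite mulr_sumr.
rewrite [RHS]exchange_big /=; apply: eq_bigr => t _.
rewrite -mulr_sumr -rmorph_sum hs rmorph_sum mulr_sumr; apply: eq_bigr => k _.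
by rewrite rmorphM mulrCA.
Qed.

End T.
Section T.
Variables (n m r : nat) (rho : 'I_m -> 'I_n -> int) (Sigma : {set {set 'I_m}}) (part : 'I_m -> 'I_r).
Lemma prim_mori P l : primitive_relation rho Sigma P l -> in_dual_Kahler rho Sigma (ext_of part l).
Proof.
move=> [sigma [c [sS cpos hs hl]]] a anef.
have [T [Tmax sT]] := @exists_max m Sigma sigma sS.
have [u [ueq uge]] := anef T Tmax.
pose U k := \sum_(t < n) u t * (rho k t)%:~R.
under eq_bigr => k _ do rewrite ext_l hl rmorphB /= mulrBr.
rewrite sumrB.
have e1 : \sum_(k < m) a k * (((k \in P)%:R : int)%:~R : RR) = \sum_(k in P) a k.
  by rewrite [RHS]big_mkcond; apply: eq_bigr => k _; case: (k \in P); rewrite ?mulr1 ?mulr0.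
have e2 : \sum_(k < m) a k * ((if k \in sigma then c k else 0)%:~R : RR) = - \sum_(k in P) U k.
  rewrite (@sum_U n m rho u P sigma c hs) -sumrN [RHS]big_mkcond /=; apply: eq_bigr => k _.
  case kS: (k \in sigma); last by rewrite mulr0.
  by rewrite ueq ?(subsetP sT) // mulrN opprK mulrC.
rewrite e1 e2 opprK -big_split /=; apply: sumr_ge0 => k _.
by have := uge k; rewrite -subr_ge0 opprK addrC.
Qed.

End T.


Section T.
Variables (n m r : nat) (rho : 'I_m -> 'I_n -> int) (Sigma : {set {set 'I_m}}) (part : 'I_m -> 'I_r).

Lemma mori_r L : nef_partition rho Sigma part -> in_Lext rho part L ->
  in_dual_Kahler rho Sigma L -> forall i, L (rshift m i) <= 0.
Proof.
move=> hnp hL hK i; rewrite (Lext_r hL) oppr_le0.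
have := hK _ (hnp i); rewrite -(ler0z RR) rmorph_sum /=.
congr (_ <= _); rewrite [RHS]big_mkcond; apply: eq_bigr => k _.
by case: (part k == i); rewrite ?mul1r ?mul0r.
Qed.

Lemma ext_nonzero P l : primitive_collection Sigma P ->
  primitive_relation rho Sigma P l -> ext_of part l <> (fun _ => 0).
Proof.
move=> [PS _] [sigma [c [sS cpos _ hl]]] e.
have l0 k : l k = 0 by have := congr1 (fun f => f (lshift r k)) e; rewrite /= ext_l.
move/negP: PS; apply; suff -> : P = sigma by [].
apply/setP => k; have := l0 k; rewrite hl.
have := cpos k.
by case: (k \in P); case: (k \in sigma) => //= h; lia.
Qed.

Lemma key L T : smooth_projective_fan rho Sigma -> L <> (fun _ => 0) ->
  in_Lext rho part L -> in_dual_Kahler rho Sigma L -> T \in Sigma ->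
  exists k, k \notin T /\ 0 < L (lshift r k).
Proof.
move=> [[[injr _] hcl hsm _ _] [a aamp]] L0 hL hK TS.
have [S [Smax TS']] := exists_max TS.
have [u [ueq ugt]] := aamp S Smax.
pose U (w : 'I_n -> RR) k := \sum_(t < n) w t * (rho k t)%:~R.
have UB w w' k : U (fun t => w' t - w t) k = U w' k - U w k.
  by rewrite /U -sumrB; apply: eq_bigr => t _; rewrite mulrBl.
pose a' k := a k + U u k.
have a'nef : nef_divisor rho Sigma a'.
  move=> S' S'max; have [u' [u'eq u'gt]] := aamp S' S'max.
  exists (fun t => u' t - u t); split.
    by move=> k kS'; rewrite -/(U _ k) UB /U u'eq // /a' opprD.
  move=> k; rewrite -/(U _ k) UB /a' opprD lerD2r.
  case kS': (k \in S'); first by rewrite /U u'eq.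
  by apply: ltW; apply: u'gt; rewrite kS'.
have hK' := hK a' a'nef.
have a'0 k : k \in S -> a' k = 0 by move=> kS; rewrite /a' /U ueq // addrN.
have a'pos k : k \notin S -> 0 < a' k.
  by move=> kS; have := ugt k kS; rewrite /a' -subr_gt0 opprK addrC.
case: (boolP [exists k, (k \notin S) && (0 < L (lshift r k))]).
  move/existsP => [k /andP[kS lk]]; exists k; split => //.
  by apply: contra kS; exact: (subsetP TS').
move/existsPn => hneg; exfalso; apply: L0.
have lneg k : k \notin S -> L (lshift r k) <= 0.
  by move=> kS; have := hneg k; rewrite kS /= leNgt.
have tle k : a' k * (L (lshift r k))%:~R <= 0.
  case kS: (k \in S); first by rewrite a'0 // mul0r.
  by rewrite pmulr_rle0 ?a'pos ?kS // lerz0; apply: lneg; rewrite kS.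
have lz k : k \notin S -> L (lshift r k) = 0.
  move=> kS; apply/eqP; rewrite eq_le lneg //=; rewrite leNgt; apply/negP => lt0.
  move: hK'; rewrite (bigD1 k) //=; apply/negP; rewrite -ltNge.
  rewrite -[X in _ < X](addr0 0); apply: ltr_leD; last by rewrite sumr_le0.
  by rewrite pmulr_rlt0 ?a'pos // ltrz0.
have hv : forall t, ((fun _ => 0 : int) t)%:~R = \sum_(k < m) (L (lshift r k))%:~R * (rho k t)%:~R :> RR.
  move=> t; rewrite /= -[LHS]/((0 : int)%:~R) -(Lext_rho hL t) rmorph_sum.
  by apply: eq_bigr => k _; rewrite rmorphM.
have hoff : forall k, k \notin S -> (L (lshift r k))%:~R = 0 :> RR.
  by move=> k kS; rewrite lz.
have [z [cz z0]] := @smooth_int n m rho S (fun k => (L (lshift r k))%:~R) (fun _ => 0) injr (hsm S (andP Smax).1) hoff hv.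
have Ll k : L (lshift r k) = 0.
  by apply/eqP; rewrite -(@intr_eq0 RR) cz z0.
apply: functional_extensionality => j.
case: (split_ordP j) => [k -> | i ->]; first exact: Ll.
by rewrite (Lext_r hL) big1 ?oppr0.
Qed.

End T.


Lemma absmax_lt (z : int) (t : nat) : (t < absz (Num.max z 0))%N -> 0 < z /\ t%:Z < z.
Proof.
case: (leP z 0) => hz.
  by [].
move=> ht; split => //; lia.
Qed.

Unset Implicit Arguments.
Theorem mainTheorem7 (n m r : nat) (rho : 'I_m -> 'I_n -> int)
    (Sigma : {set {set 'I_m}}) (part : 'I_m -> 'I_r) :
  smooth_projective_fan rho Sigma ->
  nef_partition rho Sigma part ->
  (forall p : {mpoly CC[m + r]},
      in_ideal (Iprime_gens rho Sigma part) p ->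
      in_ideal (Ind_gens rho Sigma part) p) /\
  (forall x : 'I_(m + r) -> CC,
      zero_locus (Iprime_gens rho Sigma part) x <->
      zero_locus (Ind_gens rho Sigma part) x).
Proof.
move=> hsp hnp; have hsc := hsp.1.
have gen_incl : forall g, Iprime_gens rho Sigma part g -> Ind_gens rho Sigma part g.
  move=> g [[P [l [Pc Pr ->]]] | hlin]; last by right.
  left; exists (ext_of part l); split => //.
  - exact: ext_nonzero Pc Pr.
  - exact: ext_Lext (prim_sum0 Pr).
  - exact: prim_mori Pr.
split; first by move=> p; apply: in_ideal_mono.
move=> x; split; last first.
  by move=> hz p hp; apply: hz; apply: in_ideal_mono gen_incl hp.
move=> hz p; apply: in_ideal_eval => g [[l [l0 hL hK ->]] | [mu [mu' ->]]]; last first.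
  by apply: hz; apply: in_ideal_gen; right; exists mu, mu'.
pose Zs := [set k | x (lshift r k) == 0].
have Zmeet : forall P, primitive_collection Sigma P -> exists2 k, k \in P & k \in Zs.
  move=> P Pc; have [l' Pr] := prim_rel_exists hsc P.
  have ev : (Ipoly (ext_of part l')).@[x] = 0.
    by apply: hz; apply: in_ideal_gen; left; exists P, l'.
  have [j [t ht xj]] := Ipoly_eval0 ev.
  move: ht xj; case: (split_ordP j) => [k -> | i ->].
    rewrite ext_l => /absmax_lt [lk tk] xk.
    have [sigma [c [_ cpos _ hl]]] := Pr.
    move: lk tk; rewrite hl.
    have := cpos k.
    case kP: (k \in P); case: (k \in sigma) => /= hc lk tk; try lia.
    exists k => //; rewrite inE xk.
    have -> : t = 0%N by lia.
    by [].
  move=> /absmax_lt [hi _].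
  have := mori_r hnp (ext_Lext part (prim_sum0 Pr)) (prim_mori part Pr) i.
  by rewrite leNgt hi.
have Tin : ~: Zs \in Sigma.
  apply/negPn/negP => hT; have [Q [QT QS Qp]] := min_nonface hT.
  have [k kQ kZ] := Zmeet Q (conj QS Qp).
  by have := subsetP QT k kQ; rewrite inE kZ.
have [k [kT lk]] := key hsp l0 hL hK Tin.
apply: (Ipoly_eval_zero lk).
by move: kT; rewrite inE negbK inE => /eqP.
Qed.
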